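(* For every $i\in\mathbb{N}$ and every situation $t\in[w_i]$, \[ \overline{\mathrm{E}}_t[X_i]=\tfrac12 . \]
   Context: Fair-coin game: in rounds $n=1,2,\dots$ Skeptic announces $M_n\in\mathbb{R}$ (depending only on $x_1,\dots,x_{n-1}$), then Reality announces $x_n\in\{-1,1\}$. A situation is a finite sequence $t=x_1\cdots x_l\in\{-1,1\}^l$. A path is an infinite sequence $\xi=x_1x_2\cdots$, and $\Omega$ is the set of paths. We write $\xi_n$ for the first $n$ terms of $\xi$, and say $\xi$ goes through $t$ if $\xi_l=t$. We write $s_n:=x_1+\cdots+x_n$, with $s_0=0$. A strategy $\mathcal{P}$ assigns a bet to each situation. Its capital process is $\mathcal{K}^{\mathcal{P}}(x_1\cdots x_n)=\sum_{k=1}^n\mathcal{P}(x_1\cdots x_{k-1})x_k$, and $\mathcal{K}^{\mathcal{P}}_n(\xi):=\mathcal{K}^{\mathcal{P}}(\xi_n)$. For a function $x:\Omega\to\mathbb{R}$ and a situation $t$ of length $l$, the upper price of $x$ at $t$ is \[ \overline{\mathrm{E}}_t[x]:=\inf\bigl\{a:\ \exists\mathcal{P}\ \forall\xi \text{ through } t:\ a+\mathcal{K}^{\mathcal{P}}_n(\xi)-\mathcal{K}^{\mathcal{P}}(t)\ge x(\xi)\ \text{for all but finitely many } n\bigr\}. \] Stopping times: set $v_0:=0$, and for $i\ge1$ \[ w_i:=\min\{n>v_{i-1}: s_n=0\},\qquad v_i:=\min\{n>w_i: |s_n|>\sqrt n-1\}, \] with $\min\emptyset=\infty$. Let $[w_i]$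 be the set of situations $\xi_{w_i(\xi)}$ over paths $\xi$ with $w_i(\xi)<\infty$. Finally, $X_i(\xi):=1$ if $v_i(\xi)<\infty$ and $s_{v_i}(\xi)<0$, and $X_i(\xi):=0$ otherwise. *)

(* Defs.v *)
From Stdlib Require Import Reals Lra ZArith List ClassicalEpsilon.
From Coquelicot Require Import Coquelicot.
Open Scope R_scope.

(* Reality's moves x_n in {-1,1} are encoded as booleans: true = +1, false = -1. *)
Definition sgnR (b : bool) : R := if b then 1 else -1.
Definition sgnZ (b : bool) : Z := if b then 1%Z else (-1)%Z.

(* A situation t = x_1 ... x_l is a list (in chronological order). *)
Definition situation := list bool.
(* A path xi = x_1 x_2 ...; xi k is x_{k+1}. *)
Definition path := nat -> bool.

Definition prefix (xi : path) (n : nat) : situation := map xi (List.seq 0 n).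

Definition goes_through (xi : path) (t : situation) : Prop :=
  prefix xi (length t) = t.

Definition s (xi : path) (n : nat) : Z :=
  fold_right (fun b acc => (sgnZ b + acc)%Z) 0%Z (prefix xi n).

Definition strategy := situation -> R.

Fixpoint capital_from (P : strategy) (past rest : situation) : R :=
  match rest with
  | nil => 0
  | x :: r => P past * sgnR x + capital_from P (past ++ x :: nil) r
  end.

Definition capital (P : strategy) (t : situation) : R := capital_from P nil t.

Definition capital_n (P : strategy) (n : nat) (xi : path) : R := capital P (prefix xi n).

Definition upper_price (t : situation) (x : path -> R) : Rbar :=
  Glb_Rbar (fun a => exists P : strategy, forall xi : path, goes_through xi t ->
     exists N : nat, forall n : nat, (N <= n)%nat ->
       a + capital_n P n xi - capital P t >= x xi).

Definition first_after (Q : nat -> Prop) (m n : nat) : Prop :=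
  (m < n)%nat /\ Q n /\ forall k, (m < k < n)%nat -> ~ Q k.

Definition zero_cond (xi : path) (k : nat) : Prop := s xi k = 0%Z.
Definition exit_cond (xi : path) (k : nat) : Prop :=
  Rabs (IZR (s xi k)) > sqrt (INR k) - 1.

(* vtime i xi n : v_i(xi) = n (finite).  v_0 = 0. *)
Fixpoint vtime (i : nat) (xi : path) (n : nat) : Prop :=
  match i with
  | O => n = O
  | S j => exists v w, vtime j xi v /\ first_after (zero_cond xi) v w
                       /\ first_after (exit_cond xi) w n
  end.

Definition wtime (i : nat) (xi : path) (n : nat) : Prop :=
  match i with
  | O => False
  | S j => exists v, vtime j xi v /\ first_after (zero_cond xi) v n
  end.

(* [w_i] : situations xi_{w_i(xi)} with w_i(xi) < oo *)
Definition in_stopped (i : nat) (t : situation) : Prop :=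
  exists xi n, wtime i xi n /\ t = prefix xi n.

Definition X (i : nat) (xi : path) : R :=
  if excluded_middle_informative (exists n, vtime i xi n /\ (s xi n < 0)%Z) then 1 else 0.

(* Main.v *)
Require Import Defs.
From Stdlib Require Import Reals.
From Coquelicot Require Import Coquelicot.
From Stdlib Require Import Lra Lia ZArith List ClassicalEpsilon Classical.
Open Scope R_scope.

Definition exitP (m : nat) (z : Z) : Prop := Rabs (IZR z) > sqrt (INR m) - 1.

Definition hstep (b : Z -> R) (Fk : nat -> Z -> R) (m : nat) (z : Z) : R :=
  if Rgt_dec (Rabs (IZR z)) (sqrt (INR m) - 1) then b z else Fk m z.

Fixpoint F (b : Z -> R) (T : R) (k n : nat) (s : Z) : R :=
  match k with
  | O => T
  | S k' => (hstep b (F b T k') (S n) (s + 1) + hstep b (F b T k') (S n) (s - 1)) / 2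
  end.

Lemma F_add b1 b2 b3 T1 T2 T3 : (forall z, b3 z = b1 z + b2 z) -> T3 = T1 + T2 ->
  forall k n s, F b3 T3 k n s = F b1 T1 k n s + F b2 T2 k n s.
Proof.
  intros Hb HT k; induction k as [|k IH]; intros n s; simpl; [exact HT|].
  unfold hstep.
  destruct (Rgt_dec _ _); destruct (Rgt_dec _ _); rewrite ?Hb, ?IH; lra.
Qed.

Lemma sqrt_S_ge1 n : 1 <= sqrt (INR (S n)).
Proof. rewrite <- sqrt_1. apply sqrt_le_1_alt. rewrite S_INR. pose proof (pos_INR n). lra. Qed.

Lemma F_ext b b' T : (forall z, z <> 0%Z -> b z = b' z) ->
  forall k n s, F b T k n s = F b' T k n s.
Proof.
  intros Hb k; induction k as [|k IH]; intros n s; simpl; [reflexivity|].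
  unfold hstep. pose proof (sqrt_S_ge1 n).
  destruct (Rgt_dec (Rabs (IZR (s+1))) _) as [h1|h1];
  destruct (Rgt_dec (Rabs (IZR (s-1))) _) as [h2|h2]; rewrite ?IH;
  try (rewrite (Hb (s+1)%Z)); try (rewrite (Hb (s-1)%Z)); try reflexivity;
  intro E; try rewrite E in h1; try rewrite E in h2; rewrite Rabs_R0 in *; lra.
Qed.

Lemma F_const c k : forall n s, F (fun _ => c) c k n s = c.
Proof.
  induction k as [|k IH]; intros n s; simpl; [reflexivity|].
  unfold hstep. destruct (Rgt_dec _ _); destruct (Rgt_dec _ _); rewrite ?IH; lra.
Qed.

Lemma F_sym b T k : forall n s, F b T k n (- s) = F (fun z => b (- z)%Z) T k n s.
Proof.
  induction k as [|k IH]; intros n s; simpl; [reflexivity|].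
  unfold hstep.
  replace (- s + 1)%Z with (- (s - 1))%Z by lia.
  replace (- s - 1)%Z with (- (s + 1))%Z by lia.
  rewrite !opp_IZR, !Rabs_Ropp, !IH.
  destruct (Rgt_dec (Rabs (IZR (s+1))) _); destruct (Rgt_dec (Rabs (IZR (s-1))) _); lra.
Qed.

Definition bd (z : Z) : R := if (z <? 0)%Z then 1 else 0.
Definition bu (z : Z) : R := if (0 <? z)%Z then 1 else 0.
Definition b0 (z : Z) : R := 0.

Lemma G_decomp k n : F bd 1 k n 0 = (1 + F b0 1 k n 0) / 2 /\ F bd 0 k n 0 = (1 - F b0 1 k n 0) / 2.
Proof.
  assert (H1 : F bd 1 k n 0 = F bd 0 k n 0 + F b0 1 k n 0)
    by (apply F_add; [intro; unfold b0; lra | lra]).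
  assert (H2 : F bd 0 k n 0 = F bu 0 k n 0).
  { replace (F bd 0 k n 0) with (F bd 0 k n (- 0)) by reflexivity. rewrite F_sym. apply F_ext.
    intros z _. unfold bd, bu. destruct (- z <? 0)%Z eqn:E1; destruct (0 <? z)%Z eqn:E2;
    try reflexivity; lia. }
  assert (H3 : F (fun _ => 1) 1 k n 0 = F bd 0 k n 0 + F bu 0 k n 0 + F b0 1 k n 0).
  { rewrite (F_ext (fun _ => 1) (fun z => (bd z + bu z) + b0 z)).
    2:{ intros z Hz. unfold bd, bu, b0. destruct (z <? 0)%Z eqn:E1; destruct (0 <? z)%Z eqn:E2;
        try lra; lia. }
    rewrite (F_add (fun z => bd z + bu z) b0 _ 0 1 1); [|intros z; reflexivity| lra].
    rewrite (F_add bd bu (fun z => bd z + bu z) 0 0 0); [reflexivity | intro; reflexivity | lra]. }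
  rewrite F_const in H3. lra.
Qed.

Lemma sq_bound (x r : R) : Rabs x <= r - 1 -> 0 <= r - 1 -> x ^ 2 <= (r - 1) ^ 2.
Proof. intros H H0. rewrite <- (pow2_abs x). pose proof (Rabs_pos x). nra. Qed.

Lemma Q_bound k : forall n s, (1 <= n)%nat -> Rabs (IZR s) <= sqrt (INR n) - 1 ->
  F b0 1 k n s * (2 * sqrt (INR (n + k)) - 1) <= INR n - IZR s ^ 2.
Proof.
  induction k as [|k IH]; intros n s Hn Hs.
  - simpl. rewrite Nat.add_0_r.
    assert (Hr : 1 <= sqrt (INR n)) by (destruct n; [lia| apply sqrt_S_ge1]).
    pose proof (sq_bound _ _ Hs ltac:(lra)).
    pose proof (sqrt_sqrt (INR n) (pos_INR n)). nra.
  - simpl F.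
    set (r := sqrt (INR n)).
    assert (Hr : 1 <= r) by (destruct n; [lia| apply sqrt_S_ge1]).
    assert (Hrr : r * r = INR n) by (apply sqrt_sqrt, pos_INR).
    assert (HD : 1 <= 2 * sqrt (INR (n + S k)) - 1).
    { pose proof (sqrt_S_ge1 (n + k)). replace (n + S k)%nat with (S (n + k)) by lia. lra. }
    replace (n + S k)%nat with (S n + k)%nat by lia.
    assert (Hsq : forall z, (z = s + 1 \/ z = s - 1)%Z -> IZR z ^ 2 <= INR n).
    { pose proof (Rle_abs (IZR s)). pose proof (Rabs_maj2 (IZR s)).
      pose proof (Rabs_pos (IZR s)).
      assert (HH : (Rabs (IZR s) + 1) ^ 2 <= INR n).
      { rewrite <- Hrr. simpl. rewrite Rmult_1_r. apply Rmult_le_compat; fold r in Hs; lra. }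
      intros z [-> | ->]; rewrite ?plus_IZR, ?minus_IZR.
      + assert ((IZR s + 1)^2 <= (Rabs (IZR s) + 1) ^ 2); [|lra].
        assert (0 <= (Rabs (IZR s) - IZR s) * (Rabs (IZR s) + IZR s + 2)) by (apply Rmult_le_pos; lra). nra.
      + assert ((IZR s - 1)^2 <= (Rabs (IZR s) + 1) ^ 2); [|lra].
        assert (0 <= (Rabs (IZR s) + IZR s) * (Rabs (IZR s) - IZR s + 2)) by (apply Rmult_le_pos; lra). nra. }
    assert (Hc : forall z, (z = s + 1 \/ z = s - 1)%Z ->
       hstep b0 (F b0 1 k) (S n) z * (2 * sqrt (INR (S n + k)) - 1) <= INR (S n) - IZR z ^ 2).
    { intros z Hz. unfold hstep. destruct (Rgt_dec _ _) as [e|e].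
      - unfold b0. specialize (Hsq z Hz). rewrite S_INR. lra.
      - apply IH; [lia|]. lra. }
    pose proof (Hc (s+1)%Z (or_introl eq_refl)) as A.
    pose proof (Hc (s-1)%Z (or_intror eq_refl)) as B.
    rewrite plus_IZR in A. rewrite minus_IZR in B. rewrite S_INR in A, B.
    set (a := hstep b0 (F b0 1 k) (S n) (s + 1)) in *.
    set (b := hstep b0 (F b0 1 k) (S n) (s - 1)) in *.
    set (D := 2 * sqrt (INR (S n + k)) - 1) in *.
    assert (E : (a + b) / 2 * D = (a * D + b * D) / 2) by field.
    rewrite E. 
    assert (E2 : (IZR s + 1) ^ 2 + (IZR s - 1) ^ 2 = 2 * IZR s ^ 2 + 2) by ring.
    lra.
Qed.

Lemma Q_small l eta : (1 <= l)%nat -> 0 < eta -> exists k, F b0 1 k l 0 < eta.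
Proof.
  intros Hl He.
  set (c := (INR l / eta + 1) / 2).
  assert (Hc : 0 <= c) by (unfold c; pose proof (pos_INR l); assert (0 <= INR l / eta) by (apply Rdiv_le_0_compat; lra); lra).
  destruct (INR_unbounded (c * c)) as [k Hk]. exists k.
  pose proof (Q_bound k l 0 Hl) as Hq.
  assert (H0 : Rabs (IZR 0) <= sqrt (INR l) - 1).
  { rewrite Rabs_R0. destruct l; [lia|]. pose proof (sqrt_S_ge1 l). lra. }
  specialize (Hq H0). simpl in Hq. rewrite Rmult_0_l, Rminus_0_r in Hq.
  assert (Hs : c < sqrt (INR (l + k))).
  { rewrite <- (sqrt_square c) by lra. apply sqrt_lt_1_alt. split; [nra|].
    rewrite plus_INR. pose proof (pos_INR l). lra. }
  assert (HD : INR l / eta < 2 * sqrt (INR (l + k)) - 1) by (unfold c in Hs; lra).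
  assert (HD' : INR l < eta * (2 * sqrt (INR (l + k)) - 1)).
  { apply (Rmult_lt_compat_l eta) in HD; [|lra]. unfold Rdiv in HD.
    rewrite <- Rmult_assoc, (Rmult_comm eta), Rmult_assoc, Rinv_r, Rmult_1_r in HD; lra. }
  assert (0 < 2 * sqrt (INR (l + k)) - 1) by (pose proof (pos_INR l); assert (0 <= INR l / eta) by (apply Rdiv_le_0_compat; lra); lra).
  destruct (Rlt_or_le (F b0 1 k l 0) eta); [assumption|]. nra.
Qed.


Definition agree (xi xi' : path) (n : nat) := forall k, (k < n)%nat -> xi k = xi' k.

Lemma prefix_local xi xi' n : agree xi xi' n -> prefix xi n = prefix xi' n.
Proof. intro H. unfold prefix. apply map_ext_in. intros a Ha. apply in_seq in Ha. apply H. lia. Qed.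

Lemma agree_le xi xi' n m : agree xi xi' n -> (m <= n)%nat -> agree xi xi' m.
Proof. intros H Hm k Hk. apply H. lia. Qed.

Lemma s_local xi xi' n m : agree xi xi' n -> (m <= n)%nat -> s xi m = s xi' m.
Proof. intros H Hm. unfold s. rewrite (prefix_local xi xi' m); [reflexivity|]. eapply agree_le; eauto. Qed.

Lemma prefix_S xi n : prefix xi (S n) = prefix xi n ++ xi n :: nil.
Proof. unfold prefix. rewrite seq_S, map_app. reflexivity. Qed.

Lemma prefix_length xi n : length (prefix xi n) = n.
Proof. unfold prefix. rewrite length_map, length_seq. reflexivity. Qed.

Lemma fold_sum_app l x : fold_right (fun b acc => (sgnZ b + acc)%Z) 0%Z (l ++ x :: nil)
   = (fold_right (fun b acc => (sgnZ b + acc)%Z) 0%Z l + sgnZ x)%Z.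
Proof. induction l as [|a l IH]; simpl; [lia|]. rewrite IH. lia. Qed.

Lemma s_S xi n : s xi (S n) = (s xi n + sgnZ (xi n))%Z.
Proof. unfold s. rewrite prefix_S, fold_sum_app. reflexivity. Qed.

Lemma s_0 xi : s xi 0 = 0%Z.
Proof. reflexivity. Qed.

Lemma IZR_sgn b : IZR (sgnZ b) = sgnR b.
Proof. destruct b; reflexivity. Qed.

Lemma capital_from_app P past r x :
  capital_from P past (r ++ x :: nil) = capital_from P past r + P (past ++ r) * sgnR x.
Proof.
  revert past; induction r as [|a r IH]; intros past; simpl.
  - rewrite app_nil_r. lra.
  - rewrite IH. rewrite <- app_assoc. simpl. lra.
Qed.

Lemma cap_S P xi n : capital_n P (S n) xi = capital_n P n xi + P (prefix xi n) * sgnR (xi n).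
Proof. unfold capital_n, capital. rewrite prefix_S, capital_from_app. reflexivity. Qed.

Lemma first_after_unique Q m n1 n2 : first_after Q m n1 -> first_after Q m n2 -> n1 = n2.
Proof.
  intros [h1 [q1 r1]] [h2 [q2 r2]].
  destruct (Nat.lt_trichotomy n1 n2) as [H|[H|H]]; auto.
  - exfalso. apply (r2 n1); [lia|auto].
  - exfalso. apply (r1 n2); [lia|auto].
Qed.

Lemma first_after_local Q Q' m n : (forall k, (k <= n)%nat -> (Q k <-> Q' k)) ->
  first_after Q m n -> first_after Q' m n.
Proof.
  intros H [h [q r]]. split; [auto|split].
  - apply H; auto.
  - intros k Hk Hq. apply (r k Hk). apply H; [lia|auto].
Qed.

Lemma vtime_le j xi v : vtime j xi v -> forall k, (k <= v)%nat -> True.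
Proof. auto. Qed.

Lemma zero_local xi xi' n k : agree xi xi' n -> (k <= n)%nat -> (zero_cond xi k <-> zero_cond xi' k).
Proof. intros H Hk. unfold zero_cond. rewrite (s_local xi xi' n k H Hk). tauto. Qed.

Lemma exit_local xi xi' n k : agree xi xi' n -> (k <= n)%nat -> (exit_cond xi k <-> exit_cond xi' k).
Proof. intros H Hk. unfold exit_cond. rewrite (s_local xi xi' n k H Hk). tauto. Qed.

Lemma vtime_local j : forall xi xi' v, agree xi xi' v -> vtime j xi v -> vtime j xi' v.
Proof.
  induction j as [|j IH]; intros xi xi' v Ha Hv; simpl in *; auto.
  destruct Hv as [v' [w [H1 [H2 H3]]]].
  assert (w < v)%nat by (destruct H3; lia).
  assert (v' < w)%nat by (destruct H2; lia).
  exists v', w. split; [|split].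
  - apply (IH xi); auto. eapply agree_le; eauto. lia.
  - eapply first_after_local; [|exact H2]. intros k Hk. apply (zero_local xi xi' v); auto. lia.
  - eapply first_after_local; [|exact H3]. intros k Hk. apply (exit_local xi xi' v); auto.
Qed.

Lemma vtime_unique j : forall xi v1 v2, vtime j xi v1 -> vtime j xi v2 -> v1 = v2.
Proof.
  induction j as [|j IH]; intros xi v1 v2 H1 H2; simpl in *.
  - lia.
  - destruct H1 as [a [b [A [B C]]]]. destruct H2 as [a' [b' [A' [B' C']]]].
    pose proof (IH _ _ _ A A'); subst a'.
    pose proof (first_after_unique _ _ _ _ B B'); subst b'.
    eapply first_after_unique; eauto.
Qed.


Definition ext (u : situation) : path := fun k => nth k u false.

Lemma ext_prefix xi n : agree (ext (prefix xi n)) xi n.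
Proof.
  intros k Hk. unfold ext, prefix.
  rewrite (nth_indep _ false (xi 0%nat)) by (rewrite length_map, length_seq; lia).
  rewrite map_nth, seq_nth by lia. reflexivity.
Qed.

Definition aliveP (l : nat) (xi : path) (n : nat) : Prop :=
  forall k, (l < k <= n)%nat -> ~ exit_cond xi k.

Lemma alive_local l xi xi' n : agree xi xi' n -> (aliveP l xi n <-> aliveP l xi' n).
Proof.
  intros H. unfold aliveP. split; intros A k Hk; specialize (A k Hk);
  rewrite (exit_local xi xi' n k H) in *; tauto.
Qed.

Lemma alive_le l xi n m : aliveP l xi n -> (m <= n)%nat -> aliveP l xi m.
Proof. intros A Hm k Hk. apply A. lia. Qed.

Lemma if_iff {A B : Prop} {T : Type} (x y : T) : (A <-> B) ->
  (if excluded_middle_informative A then x else y) = (if excluded_middle_informative B then x else y).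
Proof.
  intros H. destruct (excluded_middle_informative A), (excluded_middle_informative B); tauto.
Qed.

Lemma first_exists (Q : nat -> Prop) l n : (exists k, (l < k <= n)%nat /\ Q k) ->
  exists v, first_after Q l v /\ (v <= n)%nat.
Proof.
  induction n as [|n IH]; intros [k [Hk Qk]]; [lia|].
  destruct (classic (exists k, (l < k <= n)%nat /\ Q k)) as [E|E].
  - destruct (IH E) as [v [Hv Hvn]]. exists v. split; auto.
  - exists (S n). assert (k = S n).
    { destruct (Nat.eq_dec k (S n)); auto. exfalso. apply E. exists k. split; auto. lia. }
    subst k. split; [|lia]. split; [lia|]. split; auto.
    intros k' Hk' Qk'. apply E. exists k'. split; auto. lia.
Qed.

Lemma not_alive_first l xi n : ~ aliveP l xi n ->
  exists v, first_after (exit_cond xi) l v /\ (v <= n)%nat.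
Proof.
  intros H. apply first_exists. apply NNPP. intro E. apply H. intros k Hk Ek.
  apply E. exists k. auto.
Qed.

Lemma first_alive l xi v : first_after (exit_cond xi) l v -> aliveP l xi (pred v).
Proof. intros [h [q r]] k Hk. apply r; lia. Qed.

Lemma first_not_alive l xi v m : first_after (exit_cond xi) l v -> (v <= m)%nat -> ~ aliveP l xi m.
Proof. intros [h [q r]] Hm A. apply (A v); auto; lia. Qed.

Lemma cap_const P xi n : forall d, (forall k, (n <= k < n + d)%nat -> P (prefix xi k) = 0) ->
  capital_n P (n + d) xi = capital_n P n xi.
Proof.
  induction d as [|d IH]; intros H; [rewrite Nat.add_0_r; reflexivity|].
  rewrite Nat.add_succ_r, cap_S, IH by (intros; apply H; lia).
  rewrite H by lia. lra.
Qed.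

Definition Xval (l : nat) (xi : path) : R :=
  if excluded_middle_informative (exists v, first_after (exit_cond xi) l v /\ (s xi v < 0)%Z) then 1 else 0.

Lemma Xval_range l xi : 0 <= Xval l xi <= 1.
Proof. unfold Xval. destruct (excluded_middle_informative _); lra. Qed.

Lemma Xval_exit l xi v : first_after (exit_cond xi) l v -> Xval l xi = bd (s xi v).
Proof.
  intros H. unfold Xval, bd. destruct (excluded_middle_informative _) as [[v' [H1 H2]]|E].
  - rewrite (first_after_unique _ _ _ _ H1 H) in H2. destruct (s xi v <? 0)%Z eqn:e; auto; lia.
  - destruct (s xi v <? 0)%Z eqn:e; auto. exfalso. apply E. exists v. split; auto. lia.
Qed.

Lemma X_char j xi0 l xi : wtime (S j) xi0 l -> agree xi xi0 l -> X (S j) xi = Xval l xi.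
Proof.
  intros [v0 [Hv0 Hz]] Ha. unfold X, Xval. apply if_iff.
  assert (Ha' : agree xi0 xi l) by (intros k Hk; symmetry; apply Ha; auto).
  assert (V0 : vtime j xi v0) by (apply (vtime_local j xi0); [eapply agree_le; eauto; destruct Hz; lia| auto]).
  assert (Z0 : first_after (zero_cond xi) v0 l).
  { eapply first_after_local; [|exact Hz]. intros k Hk. apply (zero_local xi0 xi l); auto. }
  split.
  - intros [n [[a [b [A [B C]]]] Hs]].
    pose proof (vtime_unique _ _ _ _ A V0); subst a.
    pose proof (first_after_unique _ _ _ _ B Z0); subst b.
    exists n. auto.
  - intros [v [Hv Hs]]. exists v. split; auto. simpl. exists v0, l. auto.
Qed.


Definition Phi (l N : nat) (xi : path) (n : nat) : R :=
  if excluded_middle_informative ((l <= n < N)%nat /\ aliveP l xi n) then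
    (hstep bd (F bd 1 (N - S n)) (S n) (s xi n + 1) - hstep bd (F bd 1 (N - S n)) (S n) (s xi n - 1)) / 2
  else 0.

Definition Pstrat (l N : nat) : strategy := fun u => Phi l N (ext u) (length u).

Lemma Pstrat_path l N xi n : Pstrat l N (prefix xi n) = Phi l N xi n.
Proof.
  unfold Pstrat. rewrite prefix_length. unfold Phi.
  pose proof (ext_prefix xi n) as Ha.
  rewrite (s_local _ xi n n Ha (le_n n)).
  apply if_iff. rewrite (alive_local l _ _ n Ha). tauto.
Qed.

Lemma skep_step l N xi n a : (l <= n < N)%nat -> aliveP l xi n ->
  capital_n (Pstrat l N) n xi - capital_n (Pstrat l N) l xi = F bd 1 (N - n) n (s xi n) - a ->
  capital_n (Pstrat l N) (S n) xi - capital_n (Pstrat l N) l xi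
    = hstep bd (F bd 1 (N - S n)) (S n) (s xi (S n)) - a.
Proof.
  intros Hn Ha IH. rewrite cap_S, Pstrat_path. unfold Phi.
  destruct (excluded_middle_informative _) as [_|E]; [|exfalso; apply E; auto].
  replace (N - n)%nat with (S (N - S n)) in IH by lia. simpl F in IH.
  rewrite s_S. destruct (xi n); simpl sgnR; unfold sgnZ.
  - lra.
  - replace (s xi n + -1)%Z with (s xi n - 1)%Z by lia. lra.
Qed.

Lemma skep_inv l N xi a : a = F bd 1 (N - l) l 0 -> s xi l = 0%Z ->
  forall d, (l + d <= N)%nat -> aliveP l xi (l + d) ->
  capital_n (Pstrat l N) (l + d) xi - capital_n (Pstrat l N) l xi = F bd 1 (N - (l + d)) (l + d) (s xi (l + d)) - a.
Proof.
  intros Ha Hs d. induction d as [|d IH]; intros Hd Hal.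
  - rewrite Nat.add_0_r, Hs, Ha. lra.
  - rewrite Nat.add_succ_r in *.
    rewrite (skep_step l N xi (l + d) a); [| lia | eapply alive_le; eauto | apply IH; [lia| eapply alive_le; eauto]].
    unfold hstep. destruct (Rgt_dec _ _) as [e|e]; [|reflexivity].
    exfalso. apply (Hal (S (l + d))); [lia|exact e].
Qed.

Lemma skep_main l N xi : (l <= N)%nat -> s xi l = 0%Z ->
  exists N0, forall n, (N0 <= n)%nat ->
    F bd 1 (N - l) l 0 + capital_n (Pstrat l N) n xi - capital_n (Pstrat l N) l xi >= Xval l xi.
Proof.
  intros HlN Hs. set (a := F bd 1 (N - l) l 0).
  pose proof (skep_inv l N xi a eq_refl Hs) as Inv.
  destruct (classic (aliveP l xi N)) as [AN|AN].
  - exists N. intros n Hn.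
    assert (C : capital_n (Pstrat l N) n xi = capital_n (Pstrat l N) N xi).
    { replace n with (N + (n - N))%nat by lia. apply cap_const. intros k Hk.
      rewrite Pstrat_path. unfold Phi. destruct (excluded_middle_informative _) as [[h _]|]; [lia|reflexivity]. }
    specialize (Inv (N - l)%nat ltac:(lia)). replace (l + (N - l))%nat with N in Inv by lia.
    specialize (Inv AN). rewrite Nat.sub_diag in Inv. simpl F in Inv.
    pose proof (Xval_range l xi). lra.
  - destruct (not_alive_first l xi N AN) as [v [Hv HvN]].
    pose proof Hv as [hv [qv rv]].
    exists v. intros n Hn.
    assert (C : capital_n (Pstrat l N) n xi = capital_n (Pstrat l N) v xi).
    { replace n with (v + (n - v))%nat by lia. apply cap_const. intros k Hk.
      rewrite Pstrat_path. unfold Phi. destruct (excluded_middle_informative _) as [[h A]|]; [|reflexivity].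
      exfalso. apply (first_not_alive l xi v k Hv); [lia|auto]. }
    destruct v as [|m]; [lia|].
    assert (Am : aliveP l xi m) by (apply (first_alive l xi (S m) Hv)).
    pose proof (skep_step l N xi m a ltac:(lia) Am) as St.
    specialize (Inv (m - l)%nat ltac:(lia)). replace (l + (m - l))%nat with m in Inv by lia.
    specialize (St (Inv Am)).
    unfold hstep in St. destruct (Rgt_dec _ _) as [e|e]; [|exfalso; apply e; exact qv].
    rewrite (Xval_exit l xi (S m) Hv). lra.
Qed.


Definition Ualive (N n : nat) (z : Z) : R := if (n <=? N)%nat then F bd 0 (N - n) n z else 0.
Definition Uexit (N m : nat) (z : Z) : R := if (m <=? N)%nat then bd z else 0.
Definition Unext (N m : nat) (z : Z) : R :=
  if Rgt_dec (Rabs (IZR z)) (sqrt (INR m) - 1) then Uexit N m z else Ualive N m z.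

Lemma U_harm N n z : Unext N (S n) (z + 1) + Unext N (S n) (z - 1) = 2 * Ualive N n z.
Proof.
  unfold Unext, Ualive, Uexit.
  destruct (Nat.leb_spec (S n) N) as [H|H].
  - destruct (Nat.leb_spec n N) as [H'|H']; [|lia].
    replace (N - n)%nat with (S (N - S n)) by lia. simpl F. unfold hstep.
    destruct (Rgt_dec (Rabs (IZR (z+1))) _); destruct (Rgt_dec (Rabs (IZR (z-1))) _); lra.
  - destruct (Nat.leb_spec n N) as [H'|H'].
    + replace (N - n)%nat with 0%nat by lia. simpl F.
      destruct (Rgt_dec (Rabs (IZR (z+1))) _); destruct (Rgt_dec (Rabs (IZR (z-1))) _); lra.
    + destruct (Rgt_dec (Rabs (IZR (z+1))) _); destruct (Rgt_dec (Rabs (IZR (z-1))) _); lra.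
Qed.

Definition Psi (l N : nat) (xi : path) (n : nat) (p : R) : bool :=
  if excluded_middle_informative (aliveP l xi n) then
    (if Rle_dec p (Unext N (S n) (s xi n + 1) - Ualive N n (s xi n)) then true else false)
  else (if Rle_dec p 0 then true else false).

Definition choose (l N : nat) (xi0 : path) (P : strategy) (u : situation) : bool :=
  if (length u <? l)%nat then xi0 (length u) else Psi l N (ext u) (length u) (P u).

Fixpoint build (c : situation -> bool) (k : nat) : situation :=
  match k with O => nil | S k => build c k ++ c (build c k) :: nil end.

Definition rpath (c : situation -> bool) : path := fun k => c (build c k).

Lemma build_length c k : length (build c k) = k.
Proof. induction k; simpl; [reflexivity|]. rewrite length_app, IHk. simpl. lia. Qed.

Lemma prefix_rpath c n : prefix (rpath c) n = build c n.
Proof. induction n; [reflexivity|]. rewrite prefix_S, IHn. reflexivity. Qed.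

Lemma rpath_eq c n : rpath c n = c (prefix (rpath c) n).
Proof. rewrite prefix_rpath. reflexivity. Qed.

Lemma rpath_early l N xi0 P k : (k < l)%nat -> rpath (choose l N xi0 P) k = xi0 k.
Proof.
  intros Hk. unfold rpath, choose. rewrite build_length.
  destruct (Nat.ltb_spec k l); [reflexivity|lia].
Qed.

Lemma rpath_late l N xi0 P n : (l <= n)%nat ->
  rpath (choose l N xi0 P) n = Psi l N (rpath (choose l N xi0 P)) n (P (prefix (rpath (choose l N xi0 P)) n)).
Proof.
  intros Hn. rewrite rpath_eq at 1. unfold choose at 1. rewrite prefix_length.
  destruct (Nat.ltb_spec n l); [lia|].
  set (xi := rpath (choose l N xi0 P)).
  pose proof (ext_prefix xi n) as Ha. unfold Psi.
  rewrite (s_local _ xi n n Ha (le_n n)).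
  destruct (excluded_middle_informative (aliveP l (ext (prefix xi n)) n)) as [A|A];
  destruct (excluded_middle_informative (aliveP l xi n)) as [B|B]; try reflexivity;
  exfalso; rewrite (alive_local l _ _ n Ha) in A; tauto.
Qed.

Lemma real_step_alive l N xi0 P n : (l <= n)%nat ->
  let xi := rpath (choose l N xi0 P) in aliveP l xi n ->
  capital_n P (S n) xi - capital_n P n xi <= Unext N (S n) (s xi (S n)) - Ualive N n (s xi n).
Proof.
  intros Hn xi A. rewrite cap_S, s_S.
  assert (Hx : xi n = Psi l N xi n (P (prefix xi n))) by apply rpath_late, Hn. rewrite Hx.
  pose proof (U_harm N n (s xi n)) as Hh.
  unfold Psi. destruct (excluded_middle_informative _) as [_|E]; [|contradiction].
  destruct (Rle_dec _ _) as [h|h]; simpl sgnR; unfold sgnZ.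
  - lra.
  - replace (s xi n + -1)%Z with (s xi n - 1)%Z by lia. lra.
Qed.

Lemma real_step_dead l N xi0 P n : (l <= n)%nat ->
  let xi := rpath (choose l N xi0 P) in ~ aliveP l xi n ->
  capital_n P (S n) xi <= capital_n P n xi.
Proof.
  intros Hn xi A. rewrite cap_S.
  assert (Hx : xi n = Psi l N xi n (P (prefix xi n))) by apply rpath_late, Hn. rewrite Hx.
  unfold Psi. destruct (excluded_middle_informative _) as [B|_]; [contradiction|].
  destruct (Rle_dec _ _) as [h|h]; simpl sgnR; lra.
Qed.

Lemma real_inv l N xi0 P : let xi := rpath (choose l N xi0 P) in s xi l = 0%Z ->
  forall d, aliveP l xi (l + d) ->
  capital_n P (l + d) xi - capital_n P l xi <= Ualive N (l + d) (s xi (l + d)) - Ualive N l 0.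
Proof.
  intros xi Hs d. induction d as [|d IH]; intros A.
  - rewrite Nat.add_0_r, Hs. lra.
  - rewrite Nat.add_succ_r in *.
    assert (A' : aliveP l xi (l + d)) by (eapply alive_le; eauto).
    pose proof (real_step_alive l N xi0 P (l + d) ltac:(lia) A') as St. fold xi in St.
    specialize (IH A').
    unfold Unext in St. destruct (Rgt_dec _ _) as [e|e].
    + exfalso. apply (A (S (l + d))); [lia|exact e].
    + lra.
Qed.

Lemma real_dead_mono l N xi0 P v : let xi := rpath (choose l N xi0 P) in
  (l <= v)%nat -> (forall k, (v <= k)%nat -> ~ aliveP l xi k) ->
  forall d, capital_n P (v + d) xi <= capital_n P v xi.
Proof.
  intros xi Hv H d. induction d as [|d IH]; [rewrite Nat.add_0_r; lra|].
  rewrite Nat.add_succ_r.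
  pose proof (real_step_dead l N xi0 P (v + d) ltac:(lia) (H (v + d)%nat ltac:(lia))) as St. fold xi in St. lra.
Qed.

Lemma real_main l N xi0 P a : (l <= N)%nat ->
  let xi := rpath (choose l N xi0 P) in s xi l = 0%Z ->
  a < F bd 0 (N - l) l 0 ->
  forall N0, exists n, (N0 <= n)%nat /\
    a + capital_n P n xi - capital_n P l xi < Xval l xi.
Proof.
  intros HlN xi Hs Ha N0.
  assert (Ul : Ualive N l 0 = F bd 0 (N - l) l 0).
  { unfold Ualive. destruct (Nat.leb_spec l N); [reflexivity|lia]. }
  pose proof (Xval_range l xi).
  destruct (classic (forall n, aliveP l xi n)) as [AA|AA].
  - exists (Nat.max N0 N). split; [lia|].
    pose proof (real_inv l N xi0 P Hs (Nat.max N0 N - l) (AA _)) as I. fold xi in I.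
    replace (l + (Nat.max N0 N - l))%nat with (Nat.max N0 N) in I by lia.
    assert (U0 : forall z, Ualive N (Nat.max N0 N) z = 0).
    { intros z. unfold Ualive. destruct (Nat.leb_spec (Nat.max N0 N) N); [|reflexivity].
      replace (N - Nat.max N0 N)%nat with 0%nat by lia. reflexivity. }
    rewrite U0 in I. lra.
  - apply not_all_ex_not in AA. destruct AA as [n An].
    destruct (not_alive_first l xi n An) as [v [Hv _]].
    pose proof Hv as [hv [qv rv]].
    destruct v as [|m]; [lia|].
    assert (Am : aliveP l xi m) by (apply (first_alive l xi (S m) Hv)).
    pose proof (real_inv l N xi0 P Hs (m - l) ltac:(replace (l + (m - l))%nat with m by lia; exact Am)) as I.
    fold xi in I. replace (l + (m - l))%nat with m in I by lia.
    pose proof (real_step_alive l N xi0 P m ltac:(lia) Am) as St. fold xi in St.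
    unfold Unext in St. destruct (Rgt_dec _ _) as [e|e]; [|exfalso; apply e; exact qv].
    assert (Ue : Uexit N (S m) (s xi (S m)) <= bd (s xi (S m))).
    { unfold Uexit, bd. destruct (S m <=? N)%nat; [lra|]. destruct (s xi (S m) <? 0)%Z; lra. }
    exists (Nat.max N0 (S m)). split; [lia|].
    pose proof (real_dead_mono l N xi0 P (S m) ltac:(lia)) as M.
    assert (Dead : forall k, (S m <= k)%nat -> ~ aliveP l xi k)
      by (intros k Hk; apply (first_not_alive l xi (S m) k Hv Hk)).
    specialize (M Dead (Nat.max N0 (S m) - S m)%nat). fold xi in M.
    replace (S m + (Nat.max N0 (S m) - S m))%nat with (Nat.max N0 (S m)) in M by lia.
    rewrite (Xval_exit l xi (S m) Hv). lra.
Qed.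


Lemma through_agree xi xi0 l : prefix xi l = prefix xi0 l -> agree xi xi0 l.
Proof.
  intros H k Hk. rewrite <- (ext_prefix xi l k Hk), <- (ext_prefix xi0 l k Hk), H. reflexivity.
Qed.

Theorem mainTheorem12 : forall (i : nat) (t : situation),
  (1 <= i)%nat -> in_stopped i t -> upper_price t (X i) = Finite (1 / 2).
Proof.
  intros i t Hi [xi0 [l [Hw Ht]]]. destruct i as [|j]; [lia|].
  pose proof Hw as [v0 [_ [hv0 [z0 _]]]].
  assert (Hl : (1 <= l)%nat) by lia.
  assert (Hlen : length t = l) by (rewrite Ht; apply prefix_length).
  assert (Th : forall xi, goes_through xi t -> agree xi xi0 l /\ s xi l = 0%Z /\
             forall P, capital P t = capital_n P l xi).
  { intros xi G. unfold goes_through in G. rewrite Hlen in G.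
    assert (A : agree xi xi0 l) by (apply through_agree; rewrite G; exact Ht).
    split; [exact A|split].
    - rewrite (s_local xi xi0 l l A (le_n l)). exact z0.
    - intros P. unfold capital_n. rewrite G. reflexivity. }
  assert (Mem : forall k, exists P : strategy, forall xi : path, goes_through xi t ->
     exists N : nat, forall n : nat, (N <= n)%nat ->
       F bd 1 k l 0 + capital_n P n xi - capital P t >= X (S j) xi).
  { intros k. exists (Pstrat l (l + k)). intros xi G. destruct (Th xi G) as [A [Hs Hc]].
    destruct (skep_main l (l + k) xi ltac:(lia) Hs) as [N0 HN0].
    exists N0. intros n Hn. specialize (HN0 n Hn).
    replace (l + k - l)%nat with k in HN0 by lia.
    rewrite Hc, (X_char j xi0 l xi Hw A). exact HN0. }
  unfold upper_price. apply is_glb_Rbar_unique. split.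
  - intros a [P HP]. simpl.
    destruct (Rlt_or_le a (1/2)) as [Ha|Ha]; [exfalso|lra].
    destruct (Q_small l (1 - 2 * a) Hl ltac:(lra)) as [k Hk].
    destruct (G_decomp k l) as [_ Gd].
    set (xi := rpath (choose l (l + k) xi0 P)).
    assert (G : goes_through xi t).
    { unfold goes_through. rewrite Hlen, Ht. apply prefix_local. intros m Hm.
      apply rpath_early. exact Hm. }
    destruct (Th xi G) as [A [Hs Hc]].
    destruct (HP xi G) as [N0 HN0].
    destruct (real_main l (l + k) xi0 P a ltac:(lia) Hs) with (N0 := N0) as [n [Hn Hlt]].
    { replace (l + k - l)%nat with k by lia. lra. }
    specialize (HN0 n Hn). rewrite Hc, (X_char j xi0 l xi Hw A) in HN0. cbv zeta in Hlt. fold xi in Hlt. lra.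
  - intros b Hb. destruct b as [b| |]; simpl; auto.
    + destruct (Rle_or_lt b (1/2)) as [Hb'|Hb']; [exact Hb'|exfalso].
      destruct (Q_small l (b - 1/2) Hl ltac:(lra)) as [k Hk].
      destruct (G_decomp k l) as [Gk _].
      specialize (Hb _ (Mem k)). simpl in Hb. lra.
    + exact (Hb _ (Mem 0%nat)).
Qed.
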